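(* Let $(\mathbf{L},\mathbf{R})\in\mathcal{P}_{\mathsf N}$ be superbalanced and suppose it admits a contraction map. Then for every $i\in[\mathsf N+1]$, the null reduction of $(\mathbf{L},\mathbf{R})$ on $i$ admits a contraction map (when the null reduction is nonempty, i.e. row $i$ of $\mathbf{L}$ is nonzero; if it is empty the statement is trivial).
   Context: $\mathcal{P}_{\mathsf N}$ denotes the set of pairs $(\mathbf{L},\mathbf{R})$ of $(0,1)$-matrices, $\mathbf{L}$ of size $(\mathsf N+1)\times m_L$ and $\mathbf{R}$ of size $(\mathsf N+1)\times m_R$, such that there is an index $p\in[\mathsf N+1]$ (the purifier) for which row $p$ of $\mathbf{L}$ and row $p$ of $\mathbf{R}$ are both zero. $\mathbf{A}_{(i)}$ denotes the $i$-th row of a matrix $\mathbf{A}$; $|v|=\sum_k|v_k|$; $\cdot$ is the dot product; for bit strings $x,x'$ of equal length, $|x-x'|$ is their Hamming distance. A contraction map for $(\mathbf{L},\mathbf{R})$ is a map $f:\{0,1\}^{m_L}\to\{0,1\}^{m_R}$ such that (1) $f(\mathbf{L}_{(i)})=\mathbf{R}_{(i)}$ for all $i\in[\mathsf N+1]$, and (2) $|x-x'|\ge|f(x)-f(x')|$ for all $x,x'\in\{0,1\}^{m_L}$. (The existence of a contraction map is taken as the criterion for the associated entropy inequality to be a holographic entropy inequality.) The pair is superbalanced if $\mathbf{L}_{(i)}\cdot\mathbf{L}_{(j)}=\mathbf{R}_{(i)}\cdot\mathbf{R}_{(j)}$ for all $i,j\in[\mathsf N+1]$. The null reduction of $(\mathbf{L},\mathbf{R})$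 on $i$ is the pair $(\mathbf{L}',\mathbf{R}')$ where $\mathbf{L}'$ consists of the columns of $\mathbf{L}$ having a $1$ in row $i$ and $\mathbf{R}'$ consists of the columns of $\mathbf{R}$ having a $1$ in row $i$. *)

(* Defs.v *)
From mathcomp Require Import all_boot all_algebra.
Set Implicit Arguments. Unset Strict Implicit. Unset Printing Implicit Defensive.

Definition bits (m : nat) := 'rV[bool]_m.

Definition hamming (m : nat) (x y : bits m) : nat :=
  #|[set k : 'I_m | x ord0 k != y ord0 k]|.

Definition dotb (m : nat) (x y : bits m) : nat :=
  #|[set k : 'I_m | x ord0 k && y ord0 k]|.

(* (L,R) in P_N : some purifier row p is zero in both L and R *)
Definition in_PN (N mL mR : nat) (L : 'M[bool]_(N.+1, mL)) (R : 'M[bool]_(N.+1, mR)) : Prop :=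
  exists p : 'I_N.+1, (forall k, L p k = false) /\ (forall k, R p k = false).

Definition is_contraction (N mL mR : nat) (L : 'M[bool]_(N.+1, mL)) (R : 'M[bool]_(N.+1, mR))
  (f : bits mL -> bits mR) : Prop :=
  (forall i : 'I_N.+1, f (row i L) = row i R) /\
  (forall x x' : bits mL, hamming (f x) (f x') <= hamming x x').

Definition has_contraction (N mL mR : nat) (L : 'M[bool]_(N.+1, mL)) (R : 'M[bool]_(N.+1, mR)) : Prop :=
  exists f : bits mL -> bits mR, is_contraction L R f.

Definition superbalanced (N mL mR : nat) (L : 'M[bool]_(N.+1, mL)) (R : 'M[bool]_(N.+1, mR)) : Prop :=
  forall i j : 'I_N.+1, dotb (row i L) (row j L) = dotb (row i R) (row j R).

Definition col_support (N m : nat) (A : 'M[bool]_(N.+1, m)) (i : 'I_N.+1) : {set 'I_m} :=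
  [set k | A i k].

Definition null_red (N m : nat) (A : 'M[bool]_(N.+1, m)) (i : 'I_N.+1)
  : 'M[bool]_(N.+1, #|col_support A i|) :=
  \matrix_(r < N.+1, c < #|col_support A i|) A r (enum_val c).

(* Main.v *)
Require Import Defs.
From mathcomp Require Import all_boot all_algebra.
From mathcomp Require Import zify.
Set Implicit Arguments. Unset Strict Implicit. Unset Printing Implicit Defensive.

Lemma cardP m (P : pred 'I_m) : #|[set k | P k]| = \sum_k (P k : nat).
Proof.
rewrite -sum1_card big_mkcond; apply: eq_bigr => k _; rewrite inE; by case: (P k).
Qed.

Definition wt m (x : bits m) := \sum_k (x ord0 k : nat).

Lemma hamE m (x y : bits m) : hamming x y = \sum_k (x ord0 k != y ord0 k : nat).
Proof. exact: cardP. Qed.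

Lemma dotE m (x y : bits m) : dotb x y = \sum_k (x ord0 k && y ord0 k : nat).
Proof. exact: cardP. Qed.

Lemma sum_le_eq m (F G : 'I_m -> nat) : (forall k, F k <= G k) ->
  \sum_k G k <= \sum_k F k -> forall k, F k = G k.
Proof.
move=> FG HS.
have E : \sum_k G k = \sum_k F k + \sum_k (G k - F k).
  rewrite -big_split; apply: eq_bigr => k _ /=; move: (FG k); lia.
have : \sum_k (G k - F k) == 0 by move: HS; rewrite E; lia.
rewrite sum_nat_eq0 => /forallP H k.
have := H k; move: (FG k); rewrite /= subn_eq0; lia.
Qed.

Lemma leq_sum' m (F G : 'I_m -> nat) : (forall k, F k <= G k) -> \sum_k F k <= \sum_k G k.
Proof. by move=> H; apply: leq_sum => k _. Qed.

Lemma wt_zero m (x z : bits m) : (forall k, z ord0 k = false) -> hamming x z = wt x.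
Proof. move=> Hz; rewrite hamE; apply: eq_bigr => k _; rewrite Hz; by case: (x ord0 k). Qed.

Lemma dot_self m (x : bits m) : dotb x x = wt x.
Proof. rewrite dotE; apply: eq_bigr => k _; by case: (x ord0 k). Qed.

Lemma step1 m n (f : bits m -> bits n) (z0 a x : bits m) (w0 b : bits n) :
  (forall x x', hamming (f x) (f x') <= hamming x x') ->
  (forall k, z0 ord0 k = false) -> (forall k, w0 ord0 k = false) ->
  f z0 = w0 -> f a = b -> wt a = wt b ->
  (forall k, x ord0 k -> a ord0 k) ->
  (forall k, f x ord0 k -> b ord0 k) /\ wt (f x) = wt x.
Proof.
move=> fc Hz Hw fz fa Wab Hx.
have H1 := fc x z0; rewrite fz !wt_zero // in H1.
have H2 := fc x a; rewrite fa in H2.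
have Ea : hamming x a + wt x = wt a.
  rewrite hamE /wt -big_split; apply: eq_bigr => k _ /=.
  by move: (Hx k); case: (x ord0 k); case: (a ord0 k) => // ->.
have Hb : wt b <= wt (f x) + hamming (f x) b.
  rewrite hamE /wt -big_split; apply: leq_sum' => k /=.
  by case: (f x ord0 k); case: (b ord0 k).
have EE := @sum_le_eq _ (fun k => (b ord0 k : nat))
   (fun k => (f x ord0 k : nat) + (f x ord0 k != b ord0 k)).
split.
- move=> k; have := EE _ _ k.
  case: (f x ord0 k); case: (b ord0 k) => //= H; exfalso.
  have : (0 = 2)%N; last by [].
  apply: H; first by move=> k'; case: (f x ord0 k'); case: (b ord0 k').
  rewrite big_split /= -hamE; change (wt (f x) + hamming (f x) b <= wt b); lia.
- lia.
Qed.

Lemma ham_dot m (u v : bits m) : hamming u v + 2 * dotb u v = wt u + wt v.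
Proof.
rewrite hamE dotE /wt big_distrr -!big_split; apply: eq_bigr => k _ /=.
by case: (u ord0 k); case: (v ord0 k).
Qed.

Lemma step2 m n (f : bits m -> bits n) (z0 ai aj : bits m) (w0 bi bj : bits n) :
  (forall x x', hamming (f x) (f x') <= hamming x x') ->
  (forall k, z0 ord0 k = false) -> (forall k, w0 ord0 k = false) ->
  f z0 = w0 -> f ai = bi -> f aj = bj -> wt ai = wt bi -> wt aj = wt bj ->
  dotb aj ai = dotb bj bi ->
  f (\row_k (aj ord0 k && ai ord0 k))%R = (\row_k (bj ord0 k && bi ord0 k))%R.
Proof.
move=> fc Hz Hw fz fai faj Wi Wj Dji.
set y := (\row_(k < m) (aj ord0 k && ai ord0 k))%R.
have [S1 W] := step1 fc Hz Hw fz fai Wi (x := y)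
  (ltac:(by move=> k; rewrite mxE; case: (ai ord0 k); rewrite ?andbF)).
set z := f y in S1 W *.
have Wy : wt y = dotb aj ai.
  rewrite dotE; apply: eq_bigr => k _; by rewrite mxE.
have Dy : dotb y aj = wt y.
  rewrite dotE; apply: eq_bigr => k _; rewrite mxE; by case: (aj ord0 k); case: (ai ord0 k).
have H := fc y aj; rewrite faj -/z in H.
have E1 := ham_dot y aj. have E2 := ham_dot z bj.
have Hc : dotb bj bi <= dotb z bj by lia.
have P1 := @sum_le_eq _ (fun k => (z ord0 k && bj ord0 k : nat)) (fun k => (bj ord0 k && bi ord0 k : nat)).
have R1 : forall k, (z ord0 k && bj ord0 k : nat) = (bj ord0 k && bi ord0 k : nat).
  apply: P1.
  - move=> k'; have := S1 k'; by case: (z ord0 k'); case: (bj ord0 k'); case: (bi ord0 k') => //= /(_ isT).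
  - by rewrite -!dotE.
have P2 := @sum_le_eq _ (fun k => (z ord0 k && bj ord0 k : nat)) (fun k => (z ord0 k : nat)).
have R2 : forall k, (z ord0 k && bj ord0 k : nat) = (z ord0 k : nat).
  apply: P2.
  - move=> k'; by case: (z ord0 k'); case: (bj ord0 k').
  - rewrite -dotE; change (wt z <= dotb z bj); lia.
apply/rowP => k; rewrite mxE.
have := R1 k; have := R2 k.
by case: (z _ k); case: (bj ord0 k); case: (bi ord0 k).
Qed.

Definition ext m (S : {set 'I_m}) (x : bits #|S|) : bits m :=
  (\row_k [exists c, (enum_val c == k) && x ord0 c])%R.
Definition res m (S : {set 'I_m}) (z : bits m) : bits #|S| :=
  (\row_c z ord0 (enum_val c))%R.

Lemma ext_ev m (S : {set 'I_m}) (x : bits #|S|) c : ext x ord0 (enum_val c) = x ord0 c.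
Proof.
rewrite mxE; apply/existsP/idP => [[c' /andP[/eqP /enum_val_inj -> //]]|xc].
by exists c; rewrite eqxx.
Qed.

Lemma ext_supp m (S : {set 'I_m}) (x : bits #|S|) k : ext x ord0 k -> k \in S.
Proof. rewrite mxE => /existsP[c /andP[/eqP <- _]]; exact: enum_valP. Qed.

Lemma ham_ext m (S : {set 'I_m}) (x x' : bits #|S|) : hamming (ext x) (ext x') <= hamming x x'.
Proof.
rewrite /hamming.
apply: leq_trans (leq_imset_card (@enum_val _ (mem S)) _).
apply: subset_leq_card; apply/subsetP => k; rewrite inE => Hk.
have kS : k \in S.
  move: Hk; case E: (ext x ord0 k); first by move=> _; exact: ext_supp E.
  case E': (ext x' ord0 k) => // _; exact: ext_supp E'.
rewrite -(enum_rankK_in kS kS) in Hk *.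
by apply: imset_f; rewrite inE -!ext_ev.
Qed.

Lemma ham_res m (S : {set 'I_m}) (z z' : bits m) : hamming (res S z) (res S z') <= hamming z z'.
Proof.
rewrite /hamming -(card_imset _ (@enum_val_inj _ (mem S))).
apply: subset_leq_card; apply/subsetP => k /imsetP[c]; rewrite !inE !mxE => H ->; exact: H.
Qed.

Theorem theorem1 (N mL mR : nat) (L : 'M[bool]_(N.+1, mL)) (R : 'M[bool]_(N.+1, mR)) :
  in_PN L R -> superbalanced L R -> has_contraction L R ->
  forall i : 'I_N.+1, has_contraction (null_red L i) (null_red R i).
Proof.
move=> [p [Lp Rp]] SB [f [fr fc]] i.
exists (fun x => res (col_support R i) (f (ext x))); split; last first.
  move=> x x'; apply: leq_trans (ham_res _ _ _) _.
  apply: leq_trans (fc _ _) _; exact: ham_ext.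
move=> j.
have e1 : row j (null_red L i) = res (col_support L i) (row j L).
  by apply/rowP => c; rewrite !mxE.
have e2 : ext (res (col_support L i) (row j L)) =
   (\row_k (row j L ord0 k && row i L ord0 k))%R.
  apply/rowP => k; rewrite [RHS]mxE.
  case kS: (k \in col_support L i).
    have Lik : L i k by move: kS; rewrite inE.
    rewrite -(enum_rankK_in kS kS) ext_ev mxE (enum_rankK_in kS kS) !mxE Lik.
    by rewrite andbT.
  case E: (ext _ ord0 k); first by rewrite (ext_supp E) in kS.
  by move: kS; rewrite !inE !mxE => ->; rewrite andbF.
have Wd : forall k, wt (row k L) = wt (row k R).
  by move=> k; rewrite -!dot_self SB.
rewrite e1 e2 (step2 (z0 := row p L) (w0 := row p R) fc _ _ (fr p) (fr i) (fr j)
   (Wd i) (Wd j) (SB j i)).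
- apply/rowP => c; rewrite !mxE.
  have := enum_valP c; rewrite inE => ->; by rewrite andbT.
- by move=> k; rewrite mxE.
- by move=> k; rewrite mxE.
Qed.
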